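(* Let $G$ be a finite group, $m$ a positive integer and $n$ a positive odd integer. Then $\mathrm{Pow}(G)\cong \mathrm{Pow}\big((\prod_{i=1}^{m}\mathbb{Z}_2)\times\mathbb{Z}_n\big)$ if and only if $G\cong (\prod_{i=1}^{m}\mathbb{Z}_2)\times\mathbb{Z}_n$.
   Context: All groups are finite. $\mathbb{Z}_k$ denotes the cyclic group of order $k$, and $\prod_{i=1}^m\mathbb{Z}_2$ the direct product of $m$ copies of $\mathbb{Z}_2$. For a group $X$, the power graph $\mathrm{Pow}(X)$ is the simple graph with vertex set $X$ in which two distinct vertices $x,y$ are adjacent if and only if $y\in\langle x\rangle$ or $x\in\langle y\rangle$. *)

(* Defs.v *)
From mathcomp Require Import all_boot all_fingroup all_algebra all_solvable.
Set Implicit Arguments. Unset Strict Implicit. Unset Printing Implicit Defensive.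

Local Open Scope group_scope.

Definition pow_adj (gT : finGroupType) (G : {set gT}) (x y : gT) : bool :=
  [&& x \in G, y \in G, x != y & (y \in <[x]>) || (x \in <[y]>)].

Definition pow_graph_iso (gT hT : finGroupType) (G : {set gT}) (H : {set hT}) : Prop :=
  exists f : gT -> hT,
    [/\ {in G &, injective f}, f @: G = H &
        {in G &, forall x y, pow_adj G x y = pow_adj H (f x) (f y)}].

(* (prod_{i=1}^m Z_2) x Z_n, realized as the (additive) group
   'rV['Z_2]_m x Zp n inside the external direct product 'rV['Z_2]_m * 'Z_n.
   Zp n is the full group 'Z_n for n > 1 and trivial for n = 1. *)
Definition Z2m_Zn (m n : nat) : {group ('rV['Z_2]_m * 'Z_n)} :=
  (setX [set: 'rV['Z_2]_m] (Zp n))%G.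

(* Main.v *)
Require Import Defs.
From mathcomp Require Import all_boot all_fingroup all_algebra all_solvable.
From mathcomp Require Import zify.
From Stdlib Require Import Lia.
Set Implicit Arguments. Unset Strict Implicit. Unset Printing Implicit Defensive.
Local Open Scope group_scope.


Lemma expg_pair (gT1 gT2 : finGroupType) (x : gT1 * gT2) k :
  x ^+ k = (x.1 ^+ k, x.2 ^+ k).
Proof. elim: k => [|k IH]; first by case: x. by rewrite !expgS IH. Qed.

Section Generic.
Variable gT : finGroupType.
Implicit Types (X R : {set gT}) (x y u t z : gT).

Definition Nb X x := [set u in X | (u \in <[x]>) || (x \in <[u]>)].
Definition Tw X x := [set u in X | Nb X u == Nb X x].
Definition Inv X := [set t in X | (t ^+ 2 == 1) && (t != 1)].
Definition Odd' X := [set u in X | [forall t in Inv X, u \notin Nb X t]].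

Lemma Nb_sub X x : Nb X x \subset X.
Proof. by apply/subsetP=> u; rewrite inE => /andP[]. Qed.

Lemma Nb_sym X x u : x \in X -> u \in X -> (u \in Nb X x) = (x \in Nb X u).
Proof. by move=> xX uX; rewrite !inE xX uX orbC. Qed.

Lemma Nb_id X x : x \in X -> x \in Nb X x.
Proof. by move=> xX; rewrite inE xX cycle_id. Qed.

Lemma Nb1 (G : {group gT}) x : 1 \in Nb G x.
Proof. by rewrite inE !group1. Qed.

Lemma Nb_one (G : {group gT}) : Nb G 1 = G.
Proof.
apply/setP=> u; rewrite inE; case uG: (u \in G) => //=.
by rewrite group1 orbT.
Qed.

Lemma Nb_inv X x : Nb X x^-1 = Nb X x.
Proof. by apply/setP=> u; rewrite !inE cycleV groupV. Qed.

Lemma cyc2 x v : x ^+ 2 = 1 -> v \in <[x]> -> v = 1 \/ v = x.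
Proof.
move=> x2 /cycleP[k ->]; rewrite -(expg_mod k x2).
have : k %% 2 < 2 by rewrite ltn_mod.
by case: (k %% 2) => [|[|//]] _; [left; rewrite expg0 | right; rewrite expg1].
Qed.

Lemma sq1_inv x : x ^+ 2 = 1 -> x^-1 = x.
Proof. by move=> x2; apply/eqP; rewrite eq_invg_mul -(expg1 x) -expgD x2. Qed.

Lemma inv_sq1 x : x^-1 = x -> x ^+ 2 = 1.
Proof. by move=> xi; rewrite expgS expg1 -{1}xi mulVg. Qed.

Lemma even_card_inv R :
  {in R, forall u, u^-1 \in R} -> {in R, forall u, u^-1 != u} -> ~~ odd #|R|.
Proof.
move: {2}#|R| (leqnn #|R|) => k; elim: k R => [|k IH] R.
  by rewrite leqn0 => /eqP->.
move=> le cl ne.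
case: (set_0Vmem R) => [->|[u uR]]; first by rewrite cards0.
set S := [set u; u^-1].
have SR : S \subset R by apply/subsetP=> v; rewrite !inE => /orP[]/eqP->//; apply: cl.
have cS : #|S| = 2 by rewrite cards2 eq_sym (ne u uR).
have := cardsID S R; rewrite (setIidPr SR) cS => eR.
have ltR : #|R :\: S| <= k.
  by rewrite -ltnS (leq_trans _ le) // -eR addnC -addn1 leq_add2l.
rewrite -eR /= negbK add0n IH //.
- move=> v; rewrite !inE => /andP[vS vR]; rewrite cl // andbT.
  apply: contra vS => /orP[]/eqP e; apply/orP; [right|left]; apply/eqP.
    by rewrite -e invgK. 
  by apply: invg_inj.
- by move=> v; rewrite inE => /andP[_ vR]; apply: ne.
Qed.

Section Grp.
Variable G : {group gT}.

Lemma Tw_inv x u : u \in Tw G x -> u^-1 \in Tw G x.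
Proof. by rewrite !inE Nb_inv groupV. Qed.

Lemma Tw_id x : x \in G -> x \in Tw G x.
Proof. by move=> xG; rewrite inE xG eqxx. Qed.

Lemma Tw_odd x : x \in G -> x ^+ 2 = 1 -> x != 1 -> Nb G x != G -> odd #|Tw G x|.
Proof.
move=> xG x2 x1 nd.
rewrite (cardsD1 x) Tw_id //=.
apply: even_card_inv => u; rewrite !inE => /andP[ux /andP[uG /eqP Nu]].
  rewrite groupV uG Nb_inv Nu eqxx !andbT.
  by apply: contra ux => /eqP e; rewrite -(sq1_inv x2) -e invgK.
apply/negP=> /eqP ui; have u2 := inv_sq1 ui.
have [u1|u1] := eqVneq u 1.
  by move: nd; rewrite -Nu u1 Nb_one eqxx.
have : u \in Nb G x by rewrite -Nu Nb_id.
rewrite inE uG /= => /orP[] /cyc2.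
  by case/(_ x2) => e; [rewrite e eqxx in u1 | rewrite e eqxx in ux].
by case/(_ u2) => e; [rewrite e eqxx in x1 | rewrite e eqxx in ux].
Qed.

Lemma Tw_even z :
  (forall t w, t \in G -> w \in G -> t ^+ 2 = 1 -> t != 1 -> w != 1 ->
     Nb G w \subset Nb G t -> w = t) ->
  z \in G -> z ^+ 2 != 1 -> Nb G z != G -> ~~ odd #|Tw G z|.
Proof.
move=> H3 zG z2 nd.
apply: even_card_inv => u uT; first exact: Tw_inv.
move: uT; rewrite inE => /andP[uG /eqP Nu].
apply/negP=> /eqP ui; have u2 := inv_sq1 ui.
have [u1|u1] := eqVneq u 1.
  by move: nd; rewrite -Nu u1 Nb_one eqxx.
have z1 : z != 1 by apply: contra z2 => /eqP->; rewrite expg1n.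
have := H3 u z uG zG u2 u1 z1; rewrite Nu subxx => /(_ isT) e.
by rewrite e u2 eqxx in z2.
Qed.

Lemma Nb_sq y : y ^+ 4 = 1 -> Nb G y \subset Nb G (y ^+ 2).
Proof.
move=> y4; apply/subsetP=> u; rewrite !inE => /andP[uG /orP[]]; rewrite uG /=.
  case/cycleP=> k ->.
  have [ek|ok] := boolP (~~ odd k).
    by rewrite -(odd_double_half k) (negbTE ek) add0n -mul2n expgM mem_cycle.
  apply/orP; right.
  have e : (y ^+ k) ^+ 2 = y ^+ 2.
    rewrite -expgM.
    have := odd_double_half k; rewrite (negbNE ok) -mul2n => hk.
    have -> : (k * 2 = 2 + 4 * k./2)%N.
      by rewrite -{1}hk /= mulnDl mul1n mulnAC.
    by rewrite expgD expgM y4 expg1n mulg1.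
  by rewrite -e mem_cycle.
by move=> yu; rewrite groupX ?orbT.
Qed.

End Grp.
End Generic.


Section HFacts.
Variables (gT1 gT2 : finGroupType) (A : {group gT1}) (B : {group gT2}).
Hypothesis A2 : forall a, a \in A -> a ^+ 2 = 1.
Hypothesis Bodd : odd #|B|.

Lemma apow a k : a \in A -> a ^+ k = if odd k then a else 1.
Proof.
move=> aA; rewrite -(expg_mod k (A2 aA)) modn2.
by case: (odd k); rewrite ?expg1 ?expg0.
Qed.

Lemma bodd b : b \in B -> odd #[b].
Proof. by move=> bB; apply: dvdn_odd Bodd; apply: order_dvdG. Qed.

Lemma b2 b : b \in B -> b ^+ 2 = 1 -> b = 1.
Proof.
move=> bB b2e.
have h3 : #[b] <= 2 by apply: dvdn_leq => //; rewrite order_dvdn b2e.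
have h2 := bodd bB; have h1 := order_gt0 b.
suff: #[b] = 1%N by move/eqP; rewrite order_eq1 => /eqP.
by move: h1 h2 h3; case: #[b] => [|[|[|]]].
Qed.

Lemma bpow1 b : b \in B -> b ^+ #[b].+1 = b.
Proof. by move=> bB; rewrite expgS expg_order mulg1. Qed.

Lemma pair_eq1 (x : gT1 * gT2) : (x == 1) = (x.1 == 1) && (x.2 == 1).
Proof. by case: x. Qed.

Lemma HE z : z \in setX A B -> (z ^+ 2 == 1) = (z.2 == 1).
Proof.
case: z => za zb; rewrite inE /= => /andP[zA zB].
rewrite expg_pair pair_eq1 /= A2 // eqxx /=.
by apply/eqP/eqP=> [/(b2 zB)|->] //; rewrite expg1n.
Qed.

Lemma H3 t w : t \in setX A B -> w \in setX A B -> t ^+ 2 = 1 -> t != 1 -> w != 1 ->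
  Nb (setX A B) w \subset Nb (setX A B) t -> w = t.
Proof.
move=> tH wH t2 t1 w1 sub.
have := HE tH; rewrite t2 eqxx => /esym/eqP t2e.
case: t tH t2 t1 sub t2e => ta tb tH t2 t1 sub /= t2e; subst tb.
have ta1 : ta != 1 by move: t1; rewrite pair_eq1 eqxx andbT.
move: (tH); rewrite inE /= => /andP[taA _].
case: w wH w1 sub => wa wb wH w1 sub.
move: (wH); rewrite inE /= => /andP[waA wbB].
have := subsetP sub _ (Nb_id wH); rewrite inE wH /= => /orP[].
  by case/cyc2=> // e; rewrite e eqxx in w1.
case/cycleP=> k; rewrite expg_pair /= => -[ek _].
have wat : wa = ta.
  by move: ek; rewrite apow //; case: (odd k) => // e; rewrite e eqxx in ta1.
subst wa.
set u : gT1 * gT2 := (1, wb).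
have uH : u \in setX A B by rewrite inE /= group1.
have uw : u \in <[(ta, wb)]>.
  apply/cycleP; exists #[wb].+1; rewrite expg_pair /= bpow1 // apow //.
  by rewrite /= (bodd wbB).
have := subsetP sub u; rewrite inE uH uw /= => /(_ isT); rewrite inE uH /= => /orP[].
  case/cyc2=> // -[] e; first by rewrite e.
  by rewrite -e eqxx in ta1.
case/cycleP=> j; rewrite expg_pair /= expg1n => -[e _].
by rewrite e eqxx in ta1.
Qed.


Lemma Hd z : 2 < #|A| -> z \in setX A B -> Nb (setX A B) z = setX A B -> z = 1.
Proof.
move=> A3 zH Nz; apply/eqP; apply/negPn/negP=> z1.
case: z zH Nz z1 => za zb zH Nz z1.
move: (zH); rewrite inE /= => /andP[zaA zbB].
have : ~~ (A \subset [set 1; za]).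
  apply/negP=> /subset_leq_card; rewrite cards2.
  case: (_ != _) => /= h; first by rewrite ltnNge h in A3.
  by rewrite ltnNge (leq_trans h) in A3.
case/subsetPn=> a aA; rewrite !inE negb_or => /andP[a1 aza].
have wH : (a, 1) \in setX A B by rewrite inE /= aA group1.
have := wH; rewrite -{1}Nz inE wH /= => /orP[].
  case/cycleP=> k; rewrite expg_pair /= apow // => -[e _].
  by move: e; case: (odd k) => e; [rewrite e eqxx in aza | rewrite e eqxx in a1].
case/cyc2.
- by rewrite expg_pair /= A2 // expg1n.
- by move=> e; rewrite e eqxx in z1.
- by case=> e _; rewrite e eqxx in aza.
Qed.

Lemma Inv_setX : Inv (setX A B) = setX A 1 :\ 1.
Proof.
apply/setP=> -[ta tb]; rewrite !inE /=.
case taA: (ta \in A); case tbB: (tb \in B) => //=.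
- by rewrite HE ?inE /= ?taA ?tbB //= andbC.
- by case: (tb =P 1) => [e|]; [rewrite e group1 in tbB | rewrite andbF].
- by rewrite andbF.
- by rewrite andbF.
Qed.

Lemma card_Inv_setX : #|Inv (setX A B)| = #|A| - 1.
Proof.
rewrite Inv_setX.
have := cardsD1 (1 : gT1 * gT2) (setX A (1 : {set gT2})).
rewrite in_setX /= !group1 cardsX cards1 muln1 => ->.
by rewrite add1n subn1.
Qed.

Lemma Odd'_setX : (exists2 a, a \in A & a != 1) -> Odd' (setX A B) = setX 1 B :\ 1.
Proof.
case=> a0 a0A a01.
apply/setP=> -[ua ub]; rewrite !inE /=.
case uaA: (ua \in A); last first.
  by case: (ua =P 1) => [e|]; [rewrite e group1 in uaA | rewrite /= !andbF].
case ubB: (ub \in B); last by rewrite /= !andbF.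
have uH : (ua, ub) \in setX A B by rewrite inE /= uaA ubB.
rewrite /= andbT.
have [ua1|ua1] := eqVneq ua 1.
  subst ua; rewrite andbT.
  have [ub1|ub1] := eqVneq ub 1.
    subst ub; rewrite eqxx; apply/forallP=> /(_ (a0, 1)).
    rewrite Inv_setX !inE /= a0A eqxx pair_eq1 /= (negbTE a01) /= => /negP; apply.
    by rewrite !group1.
  have ne1 : (1, ub) != 1 :> gT1 * gT2.
    by apply/negP => /eqP /(congr1 snd) /= e; rewrite e eqxx in ub1.
  rewrite ne1.
  apply/forallP=> t; apply/implyP; rewrite Inv_setX !inE.
  case: t => ta tb /=; rewrite pair_eq1 /= => /andP[tnt /andP[taA /eqP tb1]].
  subst tb; rewrite eqxx andbT in tnt.
  rewrite uaA ubB /=; apply/norP; split.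
    apply/negP; case/cyc2.
    - by rewrite expg_pair /= A2 // expg1n.
    - by move/(congr1 snd) => /= e; rewrite e eqxx in ub1.
    - by case=> e _; rewrite -e eqxx in tnt.
  apply/negP; case/cycleP=> k; rewrite expg_pair /= expg1n => -[e _].
  by rewrite e eqxx in tnt.
rewrite andbF.
have ne : (ua, 1) != 1 :> gT1 * gT2.
  by apply/negP => /eqP/(congr1 fst) /= e; rewrite e eqxx in ua1.
apply/negP=> /forallP /(_ (ua, 1)) /implyP.
rewrite Inv_setX !inE /= uaA eqxx ne /= => /(_ isT).
rewrite ubB /= => /negP; apply.
apply/orP; right; apply/cycleP; exists #[ub].
by rewrite expg_pair /= expg_order apow // (bodd ubB).
Qed.

Lemma card_Odd'_setX : (exists2 a, a \in A & a != 1) -> #|Odd' (setX A B)| = #|B| - 1.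
Proof.
move=> ex; rewrite Odd'_setX //.
have := cardsD1 (1 : gT1 * gT2) (setX (1 : {set gT1}) B); rewrite in_setX /= !group1 cardsX cards1 mul1n => ->.
by rewrite add1n subn1.
Qed.

Lemma H6 g a0 : B :=: <[g]> -> a0 \in A -> a0 != 1 ->
  exists z, exists2 t0, t0 \in Inv (setX A B) &
    [/\ z \in setX A B, t0 \in <[z]> & Odd' (setX A B) \subset Nb (setX A B) z].
Proof.
move=> Bg a0A a01.
have gB : g \in B by rewrite Bg cycle_id.
have zH : (a0, g) \in setX A B by rewrite inE /= a0A gB.
exists (a0, g), (a0, 1).
  rewrite Inv_setX !inE /= a0A eqxx !andbT.
  by apply/negP => /eqP/(congr1 fst) /= e; rewrite e eqxx in a01.
split=> //.
  apply/cycleP; exists #[g]; rewrite expg_pair /= expg_order apow //.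
  by rewrite (bodd gB).
apply/subsetP=> u; rewrite Odd'_setX; last by exists a0.
rewrite !inE; case: u => ua ub /= /andP[_ /andP[/eqP -> ubB]].
have uH : (1, ub) \in setX A B by rewrite inE /= group1 ubB.
rewrite group1 ubB /=; apply/orP; left.
move: ubB; rewrite Bg => /cycleP[i ->].
apply/cycleP; exists (#[g].+1 * i)%N; rewrite expg_pair /= apow // expgM bpow1 //.
by rewrite oddM /= (bodd gB).
Qed.

End HFacts.


Lemma Nb_adj (gT : finGroupType) (X : {set gT}) x u : x \in X -> u \in X ->
  (u \in Nb X x) = (u == x) || pow_adj X x u.
Proof.
move=> xX uX; rewrite /pow_adj inE xX uX /=.
have [->|ne] := eqVneq u x; first by rewrite cycle_id.
done.
Qed.

Lemma order2 (gT : finGroupType) (x : gT) : x ^+ 2 = 1 -> x != 1 -> #[x] = 2.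
Proof.
move=> x2 x1; have : #[x] %| 2 by rewrite order_dvdn x2.
move/dvdn_leq => /(_ isT); have := order_gt0 x.
rewrite -order_eq1 in x1; move: x1.
by case: #[x] => [|[|[|]]].
Qed.

Section Transport.
Variables (gT hT : finGroupType) (G : {group gT}) (H : {group hT}) (f : gT -> hT).
Hypotheses (fi : {in G &, injective f}) (fim : f @: G = H)
  (fadj : {in G &, forall x y, pow_adj G x y = pow_adj H (f x) (f y)}).

Lemma fG x : x \in G -> f x \in H.
Proof. by move=> xG; rewrite -fim imset_f. Qed.

Lemma fpre z : z \in H -> exists2 u, u \in G & z = f u.
Proof. by rewrite -fim => /imsetP. Qed.

Lemma fin_eq u (S : {set gT}) : u \in G -> S \subset G -> (f u \in f @: S) = (u \in S).
Proof.
move=> uG sS; apply/imsetP/idP=> [[v vS e]|uS]; last by exists u.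
by rewrite (fi uG (subsetP sS v vS) e).
Qed.

Lemma transport (S : {set gT}) (T : {set hT}) :
  S \subset G -> T \subset H -> (forall u, u \in G -> (f u \in T) = (u \in S)) ->
  f @: S = T /\ #|T| = #|S|.
Proof.
move=> sS sT e.
have fS : f @: S = T.
  apply/setP=> z; apply/imsetP/idP=> [[u uS ->]|zT].
    by rewrite e // (subsetP sS).
  have [u uG zu] := fpre (subsetP sT z zT).
  by exists u => //; rewrite -e -?zu.
split=> //; rewrite -fS card_in_imset //.
by move=> u v uS vS; apply: fi; apply: (subsetP sS).
Qed.

Lemma fN_mem x u : x \in G -> u \in G -> (f u \in Nb H (f x)) = (u \in Nb G x).
Proof.
move=> xG uG; rewrite !Nb_adj ?fG // -fadj //.
by rewrite (inj_in_eq fi).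
Qed.

Lemma fN x : x \in G -> f @: Nb G x = Nb H (f x).
Proof.
move=> xG; have [-> _] := transport (Nb_sub G x) (Nb_sub H (f x)) (fun u uG => fN_mem xG uG).
done.
Qed.

Lemma fimS (S1 S2 : {set gT}) : S1 \subset G -> S2 \subset G ->
  (f @: S1 \subset f @: S2) = (S1 \subset S2).
Proof.
move=> s1 s2; apply/idP/idP=> [sub|]; last exact: imsetS.
apply/subsetP=> v vS1; have vG := subsetP s1 v vS1.
by rewrite -(fin_eq vG s2) (subsetP sub) // imset_f.
Qed.

Lemma fimE (S1 S2 : {set gT}) : S1 \subset G -> S2 \subset G ->
  (f @: S1 == f @: S2) = (S1 == S2).
Proof. by move=> s1 s2; rewrite !eqEsubset !fimS. Qed.

Lemma fNS x y : x \in G -> y \in G ->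
  (Nb H (f y) \subset Nb H (f x)) = (Nb G y \subset Nb G x).
Proof. by move=> xG yG; rewrite -!fN // fimS // Nb_sub. Qed.

Lemma fDom x : x \in G -> (Nb H (f x) == H) = (Nb G x == G).
Proof. by move=> xG; rewrite -fN // -{1}fim fimE // Nb_sub. Qed.

Lemma fTw x : x \in G -> #|Tw H (f x)| = #|Tw G x|.
Proof.
move=> xG.
have sT : forall (X : {set _}) y, Tw X y \subset X.
  by move=> ? X y; apply/subsetP=> v; rewrite inE => /andP[].
suff e : forall u, u \in G -> (f u \in Tw H (f x)) = (u \in Tw G x).
  by case: (transport (sT _ G x) (sT _ H (f x)) e).
move=> u uG; rewrite !inE fG // uG /=.
by rewrite -!fN // fimE ?Nb_sub.
Qed.

End Transport.


Section Forward.
Variables (gT hT1 hT2 : finGroupType) (G : {group gT}) (A : {group hT1}) (B : {group hT2}).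
Variables (m n : nat) (g : hT2) (f : gT -> hT1 * hT2).
Hypotheses (A2 : forall a, a \in A -> a ^+ 2 = 1) (cardA : #|A| = (2 ^ m)%N) (m0 : 0 < m)
  (cardB : #|B| = n) (n_odd : odd n) (Bg : B :=: <[g]>).
Local Notation H := (setX_group A B).
Hypotheses (fi : {in G &, injective f}) (fim : f @: G = H)
  (fadj : {in G &, forall x y, pow_adj G x y = pow_adj H (f x) (f y)}).

Let Bodd : odd #|B|. Proof. by rewrite cardB. Qed.
Let n0 : 0 < n. Proof. by case: n n_odd. Qed.

Lemma cardG : #|G| = (2 ^ m * n)%N.
Proof.
rewrite -cardA -cardB -cardsX.
have <- : #|f @: G| = #|G| by rewrite card_in_imset.
by rewrite fim.
Qed.

Let H3' := @H3 _ _ A B A2 Bodd.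

Lemma f1 : Nb H (f 1) = H.
Proof. by apply/eqP; rewrite (fDom fi fim fadj) ?group1 // Nb_one. Qed.

Lemma NDI x : ~~ ((m == 1%N) && (n == 1%N)) -> x \in G -> x ^+ 2 = 1 -> x != 1 -> Nb G x != G.
Proof.
move=> nspec xG x2 x1; apply/negP=> /eqP dom.
have n1 : n = 1%N.
  apply/eqP; apply/negPn/negP=> n1.
  have n1' : 1 < n by case: n n0 n1 => [|[|]].
  have pp := pdiv_prime n1'.
  have podd : odd (pdiv n) := dvdn_odd (pdiv_dvd n) n_odd.
  have pG : pdiv n %| #|G| by rewrite cardG dvdn_mull // pdiv_dvd.
  have [q qG oq] := Cauchy pp pG.
  have : q \in Nb G x by rewrite dom.
  rewrite inE qG /= => /orP[].
    case/cyc2=> // e.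
      by move: oq; rewrite e order1 => e1; rewrite -e1 in pp.
    by move: oq podd; rewrite e order2 // => <-.
  move=> xq; have : #[x] %| #[q] by rewrite !orderE cardSg // cycle_subG.
  rewrite oq order2 // => d2.
  by have := dvdn_odd d2 podd.
have m2 : 2 < #|A|.
  rewrite cardA; move: nspec; rewrite n1 eqxx andbT.
  case: m m0 => [|[|m']] //= _ _; rewrite !expnS.
  have := expn_gt0 2 m'; lia.
have ex : f x = 1.
  apply: (Hd A2 m2 (fG fim xG)); apply/eqP.
  by rewrite (fDom fi fim fadj) // dom.
have e1 : f 1 = 1 by apply: (Hd A2 m2 (fG fim (group1 G)) f1).
have := fi xG (group1 G) (etrans ex (esym e1)).
by move=> e; rewrite e eqxx in x1.
Qed.

Hypothesis nspec : ~~ ((m == 1%N) && (n == 1%N)).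

Lemma IMI x : x \in Inv G -> f x \in Inv H.
Proof.
rewrite in_set => /and3P[xG /eqP x2 x1].
have nd := NDI nspec xG x2 x1.
have od := Tw_odd xG x2 x1 nd.
rewrite -(fTw fi fim fadj xG) in od.
have nd' : Nb H (f x) != H by rewrite (fDom fi fim fadj).
have fxH := fG fim xG.
rewrite in_set fxH /=.
have fx2 : f x ^+ 2 == 1.
  apply/negPn/negP=> nf; have := Tw_even (@H3' ) fxH nf nd'.
  by rewrite od.
rewrite fx2 /=; apply: contra nd' => /eqP->; by rewrite Nb_one.
Qed.

Lemma NO4 y : y \in G -> #[y] != 4.
Proof.
move=> yG; apply/negP=> /eqP oy.
have y4 : y ^+ 4 = 1 by rewrite -oy expg_order.
set x := y ^+ 2.
have xG : x \in G by rewrite groupX.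
have x2 : x ^+ 2 = 1 by rewrite -expgM.
have x1 : x != 1 by rewrite -order_dvdn oy.
have xI : x \in Inv G by rewrite in_set xG x2 eqxx x1.
have fxI := IMI xI.
move: (fxI); rewrite in_set => /and3P[fxH /eqP fx2 fx1].
have sub : Nb H (f y) \subset Nb H (f x) by rewrite (fNS fi fim fadj) // Nb_sq.
have fy1 : f y != 1.
  apply/eqP=> e; move: sub; rewrite e Nb_one => sub.
  have : Nb H (f x) == H by rewrite eqEsubset Nb_sub sub.
  by rewrite (fDom fi fim fadj) // (negbTE (NDI nspec xG x2 x1)).
have := H3' fxH (fG fim yG) fx2 fx1 fy1 sub.
move/(fi yG xG) => e.
have e2 : y * y = y * 1 by rewrite mulg1 {3}e /x expgS expg1.
move/mulgI: e2 => y1; by move: oy; rewrite y1 order1.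
Qed.

Lemma elt2 p : p \in G -> 2.-elt p -> p ^+ 2 = 1.
Proof.
move=> pG pe; have [k ok] := p_natP pe.
case: k ok => [|[|k]] ok.
- by move: ok; rewrite expn0 => /eqP; rewrite order_eq1 => /eqP->; rewrite expg1n.
- by apply/eqP; rewrite -order_dvdn ok.
have : #[p ^+ (2 ^ k)] = 4.
  rewrite orderXdiv; last by rewrite ok; apply: dvdn_exp2l; rewrite ltnW.
  by rewrite ok !expnS mulnA mulnK // expn_gt0.
by move/eqP; rewrite (negbTE (NO4 (groupX _ pG))).
Qed.

Lemma SylowP2 : exists2 P : {group gT}, P \subset G &
  #|P| = (2 ^ m)%N /\ (forall x, x \in P -> x ^+ 2 = 1).
Proof.
have [P sylP] := Sylow_exists 2 G.
exists P; first exact: pHall_sub sylP.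
split.
  rewrite (card_Hall sylP) cardG p_part lognM ?expn_gt0 //.
  rewrite pfactorK // logn_coprime ?addn0 //.
  by rewrite coprime2n.
move=> x xP; apply: elt2; first exact: (subsetP (pHall_sub sylP)).
exact: mem_p_elt (pHall_pgroup sylP) xP.
Qed.

Lemma A_nontriv : exists2 a, a \in A & a != 1.
Proof.
have : ~~ (A \subset [set 1]).
  apply/negP=> /subset_leq_card; rewrite cards1 cardA.
  by case: m m0 => // m' _; rewrite expnS; have := expn_gt0 2 m'; lia.
by case/subsetPn=> a aA; rewrite inE => a1; exists a.
Qed.

Variables (P : {group gT}).
Hypotheses (sPG : P \subset G) (cardP : #|P| = (2 ^ m)%N) (P2 : forall x, x \in P -> x ^+ 2 = 1).

Lemma InvG : Inv G = P :\ 1 /\ f @: Inv G = Inv H.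
Proof.
have sIG : Inv G \subset G by apply/subsetP=> x; rewrite in_set => /andP[].
have sub1 : P :\ 1 \subset Inv G.
  apply/subsetP=> x; rewrite !inE => /andP[x1 xP].
  by rewrite (subsetP sPG) // P2 // eqxx x1.
have cP1 : #|P :\ 1| = (2 ^ m - 1)%N.
  by have := cardsD1 1 P; rewrite group1 cardP => ->; rewrite add1n subn1.
have cIH : #|Inv H| = (2 ^ m - 1)%N by rewrite card_Inv_setX // cardA.
have sfI : f @: Inv G \subset Inv H by apply/subsetP=> z /imsetP[x xI ->]; apply: IMI.
have cfI : #|f @: Inv G| = #|Inv G|.
  by rewrite card_in_imset // => x y xI yI; apply: fi; apply: (subsetP sIG).
have le : #|Inv G| <= (2 ^ m - 1)%N by rewrite -cfI -cIH subset_leq_card.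
have e1 : Inv G = P :\ 1.
  by apply/esym/eqP; rewrite eqEcard sub1 cP1 le.
split=> //; apply/eqP; rewrite eqEcard sfI cfI cIH e1 cP1 leqnn.
by [].
Qed.

Lemma sq1P x : x \in G -> x ^+ 2 = 1 -> x \in P.
Proof.
move=> xG x2; have [->|x1] := eqVneq x 1; first exact: group1.
have : x \in Inv G by rewrite in_set xG x2 eqxx x1.
by case: InvG => -> _; rewrite inE => /andP[].
Qed.

Lemma Odd'_tr : f @: Odd' G = Odd' H /\ #|Odd' G| = (n - 1)%N.
Proof.
have sOG : Odd' G \subset G by apply/subsetP=> x; rewrite in_set => /andP[].
have sOH : Odd' H \subset H by apply/subsetP=> x; rewrite in_set => /andP[].
have [_ fI] := InvG.
have e : forall u, u \in G -> (f u \in Odd' H) = (u \in Odd' G).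
  move=> u uG; rewrite [f u \in Odd' _]in_set [u \in Odd' _]in_set (fG fim uG) uG /=.
  have sIG : Inv G \subset G by apply/subsetP=> x; rewrite in_set => /andP[].
  apply/forallP/forallP=> h t.
    apply/implyP=> tI; have := h (f t); rewrite (IMI tI) /=.
    by rewrite (fN_mem fi fim fadj (subsetP sIG _ tI) uG).
  apply/implyP; rewrite -fI => /imsetP[t' tI ->].
  rewrite (fN_mem fi fim fadj (subsetP sIG _ tI) uG).
  exact: (implyP (h t')).
have [fO cO] := transport fi fim sOG sOH e.
split=> //; rewrite -cO card_Odd'_setX // ?cardB //.
exact: A_nontriv.
Qed.

Lemma O1 u : u \in Odd' G -> odd #[u].
Proof.
rewrite in_set => /andP[uG /forallP h]; apply/negPn/negP=> ev.
set d := (#[u] %/ 2)%N.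
have eu : #[u] = (d * 2)%N by rewrite divnK // dvdn2.
have d0 : 0 < d by move: (order_gt0 u); rewrite eu muln_gt0 => /andP[].
have os : #[u ^+ d] = 2 by rewrite orderXdiv eu ?dvdn_mulr // mulKn.
set s0 := u ^+ d.
have sI : s0 \in Inv G.
  rewrite in_set groupX //= -order_dvdn os dvdnn /= -order_eq1 os.
  by [].
have := implyP (h s0) sI; rewrite in_set uG /= negb_or => /andP[_].
by rewrite mem_cycle.
Qed.

Lemma O2 u : u \in G -> u != 1 -> odd #[u] -> u \in Odd' G.
Proof.
move=> uG u1 ou; rewrite in_set uG /=; apply/forallP=> t; apply/implyP.
rewrite in_set => /and3P[tG /eqP t2 t1].
rewrite in_set uG /= negb_or; apply/andP; split; apply/negP.
  case/cyc2=> // e; first by rewrite e eqxx in u1.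
  by move: ou; rewrite e order2.
move=> tu; have : #[t] %| #[u] by rewrite !orderE cardSg // cycle_subG.
by rewrite order2 // => /dvdn_odd /(_ ou).
Qed.

Lemma Inv_nonempty : exists t, t \in Inv G.
Proof.
have [e1 _] := InvG; rewrite e1.
have : ~~ (P \subset [set 1]).
  apply/negP=> /subset_leq_card; rewrite cards1 cardP.
  by case: m m0 => // m' _; rewrite expnS; have := expn_gt0 2 m'; lia.
case/subsetPn=> t tP; rewrite inE => t1; exists t.
by rewrite !inE t1 tP.
Qed.

Lemma O3 : 1 \notin Odd' G.
Proof.
have [t tI] := Inv_nonempty.
rewrite in_set group1 /=; apply/negP=> /forallP /(_ t); rewrite tI /= Nb1.
by [].
Qed.

Lemma Ylem : exists2 y, y \in G &
  exists2 s0, s0 \in Inv G & s0 \in <[y]> /\ Odd' G \subset <[y]>.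
Proof.
have [a0 a0A a01] := A_nontriv.
have [z [t0 t0I [zH t0z sub]]] := H6 A2 Bodd Bg a0A a01.
have [_ fI] := InvG.
have sIG : Inv G \subset G by apply/subsetP=> x; rewrite in_set => /andP[].
have [w [wH [t0w [subw [y [yG [fy y1]]]]]]] : exists w, w \in H /\ (t0 \in <[w]> /\
   (Odd' H \subset Nb H w /\ exists y, y \in G /\ (f y = w /\ y != 1))).
  have [y1 y1G fy1] := fpre fim zH.
  have zH' : z^-1 \in H by rewrite groupV.
  have [y2 y2G fy2] := fpre fim zH'.
  have [y1n1|y11] := boolP (y1 != 1).
    by exists z; do !split=> //; exists y1.
  move/negPn/eqP: y11 => y11; subst y1.
  have [zz|zz] := eqVneq z^-1 z.
    have z2 := inv_sq1 zz.
    have z1 : z != 1.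
      apply/eqP=> e; move: t0z t0I; rewrite e cycle1 inE => /eqP->.
      by rewrite in_set => /and3P[_ _]; rewrite eqxx.
    have : z \in Inv H by rewrite in_set zH z2 eqxx z1.
    rewrite -fI => /imsetP[y' y'I ey'].
    have := fi (group1 G) (subsetP sIG _ y'I) (etrans (esym fy1) ey').
    by move=> e; move: y'I; rewrite -e in_set => /and3P[_ _]; rewrite eqxx.
  exists z^-1; do !split; first exact: zH'.
  - by rewrite cycleV.
  - by rewrite Nb_inv.
  exists y2; do !split=> //; apply/eqP=> e; subst y2.
  by move: zz; rewrite fy2 -fy1 eqxx.
move: (t0I); rewrite -fI => /imsetP[s0 s0I es0].
have s0G := subsetP sIG _ s0I.
move: (s0I); rewrite in_set => /and3P[_ /eqP s02 s01].
have ys : y \in Nb G s0.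
  rewrite -(fN_mem fi fim fadj s0G yG) fy -es0 in_set wH /=.
  by rewrite t0w orbT.
have s0y : s0 \in <[y]>.
  move: ys; rewrite in_set yG /= => /orP[] //.
  by case/cyc2=> // e; [rewrite e eqxx in y1 | rewrite e cycle_id].
exists y => //; exists s0 => //; split=> //.
have [fO _] := Odd'_tr.
apply/subsetP=> q qO.
have qG : q \in G by move: qO; rewrite in_set => /andP[].
have : q \in Nb G y.
  rewrite -(fN_mem fi fim fadj yG qG) fy (subsetP subw) // -fO imset_f //.
rewrite in_set qG /= => /orP[] // yq.
have s0q : s0 \in <[q]> by apply: (subsetP _ _ s0y); rewrite cycle_subG.
move: qO; rewrite in_set qG /= => /forallP /(_ s0); rewrite s0I /=.
by rewrite in_set qG s0q orbT.
Qed.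

Lemma iso_final : G \isog H.
Proof.
have [y yG [s0 s0I [s0y sO]]] := Ylem.
move: (s0I); rewrite in_set => /and3P[s0G /eqP s02 s01].
have d2 : 2 %| #[y].
  by rewrite -(order2 s02 s01) !orderE cardSg // cycle_subG.
set k := (#[y] %/ 2)%N.
have ey : #[y] = (k * 2)%N by rewrite divnK.
have k0 : 0 < k by move: (order_gt0 y); rewrite ey muln_gt0 => /andP[].
have ko : odd k.
  apply/negPn/negP=> ke.
  have ek : k = (k %/ 2 * 2)%N by rewrite divnK // dvdn2.
  have d4 : 4 %| #[y] by rewrite ey ek -mulnA dvdn_mull.
  have : #[y ^+ (#[y] %/ 4)] = 4.
    have e4 := divnK d4.
    have dp : 0 < #[y] %/ 4 by rewrite divn_gt0 // dvdn_leq.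
    rewrite orderXdiv; last by rewrite -{2}e4 dvdn_mulr.
    by rewrite -{1}e4 mulKn.
  by move/eqP; rewrite (negbTE (NO4 (groupX _ yG))).
set q0 := y ^+ 2.
have oq0 : #[q0] = k by rewrite orderXdiv.
have q0G : q0 \in G by rewrite groupX.
have sOK : Odd' G \subset <[q0]>.
  apply/subsetP=> q qO.
  have /cycleP[i qi] := subsetP sO q qO.
  have oq := O1 qO.
  have ej : (#[q].+1 = 2 * (#[q].+1)./2)%N.
    by rewrite mul2n -[LHS](odd_double_half) /= oq.
  have -> : q = q ^+ (#[q].+1) by rewrite expgSr expg_order mul1g.
  rewrite ej expgM {1}qi -!expgM; apply/cycleP; exists (i * (#[q].+1)./2)%N; rewrite -expgM; congr (y ^+ _); nia.
have O3' := O3.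
have cOK : #|1 |: Odd' G| = n.
  rewrite cardsU1 O3' (proj2 Odd'_tr) /=; lia.
have nk : n <= k.
  by rewrite -cOK -oq0 orderE subset_leq_card // subUset sub1set group1 sOK.
have kn : k %| n.
  have := order_dvdG q0G; rewrite oq0 cardG Gauss_dvdr //.
  by rewrite coprimeXr // coprimen2.
have kn' : k = n by apply/eqP; rewrite eqn_leq nk dvdn_leq.
set K := <[q0]>.
have cK : #|K| = n by rewrite -orderE oq0.
have oddK : forall u, u \in G -> odd #[u] -> u \in K.
  move=> u uG ou; have [->|u1] := eqVneq u 1; first exact: group1.
  exact: (subsetP sOK) (O2 uG u1 ou).
have KG : K \subset G by rewrite cycle_subG.
have nPG : G \subset 'N(P).
  apply/normsP=> x xG; apply/eqP; rewrite eqEcard cardJg leqnn andbT.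
  apply/subsetP=> v; rewrite mem_conjg => vx.
  have vG : v \in G by rewrite -(groupJr _ (groupVr xG)) (subsetP sPG).
  apply: sq1P => //; have := P2 vx; rewrite -conjXg.
  by move/eqP; rewrite conjg_eq1 => /eqP.
have nKG : G \subset 'N(K).
  apply/normsP=> x xG; apply/eqP; rewrite eqEcard cardJg leqnn andbT.
  apply/subsetP=> v; rewrite mem_conjg => vx.
  have vG : v \in G by rewrite -(groupJr _ (groupVr xG)) (subsetP KG).
  apply: oddK => //; rewrite -(orderJ v x^-1).
  by apply: dvdn_odd (order_dvdG vx) _; rewrite cK n_odd.
have tiPK : P :&: K = 1.
  by apply: coprime_TIg; rewrite cardP cK coprimeXl // coprime2n.
have cPK : K \subset 'C(P).
  rewrite centsC; apply/commG1P/trivgP; rewrite -tiPK.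
  apply: commg_subI; rewrite subsetI subxx /=.
    exact: subset_trans sPG nKG.
  exact: subset_trans KG nPG.
have dPK : P \x K = G.
  rewrite dprodE //; apply/eqP; rewrite eqEcard mul_subG //= TI_cardMg //.
  by rewrite cardP cK cardG.
apply: (isog_dprod dPK (@setX_dprod _ _ A B)).
  have abP : 2.-abelem P by apply: exponent2_abelem; apply/exponentP.
  rewrite (isog_abelem_card _ abP) cardsX cards1 muln1 cardA cardP eqxx andbT.
  apply: exponent2_abelem; apply/exponentP=> -[xa xb]; rewrite inE /= => /andP[xaA].
  by rewrite inE => /eqP->; rewrite expg_pair /= A2 // expg1n.
rewrite (isog_cyclic_card _ (cycle_cyclic q0)).
have cB : cyclic B by rewrite Bg cycle_cyclic.
rewrite -(isog_cyclic (@isog_set1X _ _ B)) cB /=.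
by rewrite cardsX cards1 mul1n cardB -orderE oq0 kn'.
Qed.

End Forward.


Lemma forward (gT hT1 hT2 : finGroupType) (G : {group gT}) (A : {group hT1}) (B : {group hT2})
  (m n : nat) (g : hT2) :
  (forall a, a \in A -> a ^+ 2 = 1) -> #|A| = (2 ^ m)%N -> 0 < m ->
  #|B| = n -> odd n -> B :=: <[g]> ->
  pow_graph_iso G (setX_group A B) -> G \isog setX_group A B.
Proof.
move=> A2 cA m0 cB no Bg [f [fi fim fadj]].
have cG := cardG cA cB fi fim.
have [sp|nsp] := boolP ((m == 1%N) && (n == 1%N)).
  move: sp => /andP[/eqP m1 /eqP n1]; rewrite m1 n1 in cA cB cG.
  have pG : prime #|G| by rewrite cG.
  rewrite (isog_cyclic_card _ (prime_cyclic pG)) cardsX cA cB cG eqxx andbT.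
  by apply: prime_cyclic; rewrite cardsX cA cB.
have [P sPG [cP P2]] := SylowP2 A2 cA m0 cB no fi fim fadj nsp.
exact: (iso_final A2 cA m0 cB no Bg fi fim fadj nsp sPG cP P2).
Qed.

Lemma backward (gT hT : finGroupType) (G : {group gT}) (K : {group hT}) :
  G \isog K -> pow_graph_iso G K.
Proof.
case/isogP=> f injf fG.
exists f; split.
- by apply/injmP.
- by rewrite -morphimEdom.
move=> x y xG yG.
have memf : forall u (S : {set gT}), u \in G -> S \subset G -> (f u \in f @* S) = (u \in S).
  move=> u S uG sS; apply/idP/idP; last exact: mem_morphim.
  by move=> h; rewrite -(injmK injf sS); apply/morphpreP.
rewrite /pow_adj -fG !mem_morphim // /= (inj_in_eq (injmP injf)) //.
rewrite -!morphim_cycle // !memf // ?cycle_subG //.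
by rewrite xG yG.
Qed.


Lemma rV2 m (a : 'rV['Z_2]_m) : a ^+ 2 = 1.
Proof.
rewrite FinRing.zmodXgE FinRing.zmod1gE; apply/rowP=> i; rewrite mulmxnE !mxE.
by case: (a ord0 i) => [[|[|]]] //= ?; apply/val_inj.
Qed.

Lemma card_rV2 m : #|[set: 'rV['Z_2]_m]| = (2 ^ m)%N.
Proof. by rewrite cardsT card_mx card_ord mul1n. Qed.

Lemma Zp_cyc n : exists g : 'Z_n, Zp n :=: <[g]>.
Proof.
rewrite /Zp; case: ifP => _; first by exists Zp1; rewrite Zp_cycle.
by exists 1; rewrite cycle1.
Qed.

Theorem corollary6 (gT : finGroupType) (G : {group gT}) (m n : nat) :
  0 < m -> 0 < n -> odd n ->
  pow_graph_iso G (Z2m_Zn m n) <-> G \isog Z2m_Zn m n.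
Proof.
move=> m0 n0 no; split; last exact: backward.
have [g Bg] := Zp_cyc n.
apply: (forward (fun a _ => rV2 a) (card_rV2 m) m0 (card_Zp n0) no Bg).
Qed.
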